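(* In the inverse active sensing setting described in the context, the posterior over strategies given the data $\mathcal{D}$ satisfies $$\mathbb{P}\{\pi^\kappa_\rho(\cdot;\eta)\mid\mathcal{D}\}\ \propto\ \mathbb{P}\{\kappa\}\,\mathbb{P}\{\eta\mid\kappa\}\,\mathbb{P}\{\rho\}\prod_{n=1}^N\prod_{t=0}^{\tau_n-1}\pi^\kappa_\rho(\tilde\lambda_{n,t}\mid\mu_{n,t},\nu_{n,t};\eta),$$ where $\mu_{n,t}$ is computed recursively from the known prior $\mu_{n,0}$ of episode $n$ via the update $M$, and $\nu_{n,t}=1$ prior to stopping; in particular the problem dynamics ($p$ and $q$) drop out of the posterior.
   Context: Timely decision problem: finite sets $\Theta$ (decisions), $\Lambda$ (acquisitions), $\Omega$ (outcomes); known distributions $q_{\theta,\lambda}$ on $\Omega$ and constants $p_{\theta,\lambda}\in(0,1)$. In an episode a latent $\theta\sim\mu_0$ (known); survival $\nu_0=1$; at each time $t$ with $\nu_t=1$ the agent chooses $\tilde\lambda_t\in\Lambda\cup\Theta$, either an acquisition $\lambda_t\in\Lambda$ or a terminating decision $\hat\theta\in\Theta$. After an acquisition, given $\theta$, $\nu_{t+1}=0$ (deadline, after which nothing happens; outcome recorded as $\varnothing$) with probability $p_{\theta,\lambda_t}$, otherwise $\nu_{t+1}=1$ and outcome $\omega_{t+1}\sim q_{\theta,\lambda_t}$ is observed. $\tau$ is the episode's stopping time. The posterior is updated by $M(\lambda,\mu,\omega)(\theta)\propto(1-p_{\theta,\lambda})q_{\theta,\lambda}(\omega)\mu(\theta)$.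 Strategies: let $\mathcal K$ be a set of sensing criteria and $\mathcal H=\mathbb{R}^d$ a space of preference parameters $\eta$; for each $\kappa\in\mathcal K$, $\eta\in\mathcal H$ and $\tilde\lambda\in\Lambda\cup\Theta$ there is a function $\tilde Q^\kappa_{\tilde\lambda}(\cdot,\cdot;\eta):\Delta(\Theta)\times\{0,1\}\to\mathbb{R}_+$ (the criterion's acquisition factors for $\tilde\lambda\in\Lambda$, decision factors for $\tilde\lambda\in\Theta$). For inverse temperature $\rho\in\mathbb{R}$, the Boltzmann strategy is $\pi^\kappa_\rho(\tilde\lambda\mid\mu,\nu;\eta)=\exp(-\rho\tilde Q^\kappa_{\tilde\lambda}(\mu,\nu;\eta))/\sum_{\tilde\lambda'\in\Lambda\cup\Theta}\exp(-\rho\tilde Q^\kappa_{\tilde\lambda'}(\mu,\nu;\eta))$. A strategy is thus specified by $(\kappa,\eta,\rho)$, with prior $\mathbb{P}\{\kappa\}\mathbb{P}\{\eta\mid\kappa\}\mathbb{P}\{\rho\}$. Data $\mathcal D=\{(\tilde\lambda_{n,t},\tilde\omega_{n,t+1})_{t=0}^{\tau_n-1}\}_{n=1}^N$ consists of $N$ episodes generated by such a strategy, where $\tilde\lambda_{n,t}$ are the agent's choices and $\tilde\omega_{n,t+1}\in\Omega\cup\{\varnothing\}$ the observed outcomes (with $\varnothing$ for a deadline or terminal step). *)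

(* Defs.v *)
From mathcomp Require Import all_boot all_order all_algebra.
From mathcomp Require Import reals sequences exp.
Set Implicit Arguments. Unset Strict Implicit. Unset Printing Implicit Defensive.
Import Order.TTheory GRing.Theory Num.Theory.
Local Open Scope ring_scope.

Section Model.
Variables (R : realType) (Theta Lambda Omega : finType).

(* beliefs mu : Delta(Theta), represented as functions Theta -> R *)
Definition belief := {ffun Theta -> R}.
(* agent choices: acquisitions (inl) or terminating decisions (inr) *)
Definition act := (Lambda + Theta)%type.
(* recorded outcomes: Some omega, or None for the empty outcome (deadline / terminal) *)
Definition obs := option Omega.
Definition step := (act * obs)%type.
(* a strategy: pi(choice | mu, nu) *)
Definition strategy := belief -> bool -> act -> R.

Definition is_dist (T : finType) (f : T -> R) :=
  (forall x, 0 <= f x) /\ \sum_(x : T) f x = 1.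

Variables (p : Theta -> Lambda -> R) (q : Theta -> Lambda -> Omega -> R).

Definition Mupd (l : Lambda) (mu : belief) (w : Omega) : belief :=
  [ffun th => (1 - p th l) * q th l w * mu th /
               \sum_(th' : Theta) (1 - p th' l) * q th' l w * mu th'].

Definition next_belief (mu : belief) (s : step) : belief :=
  match s with
  | (inl l, Some w) => Mupd l mu w
  | _ => mu
  end.

(* Probability, given the latent theta and the agent's current belief mu,
   of the complete remaining episode e (ending at the stopping time)
   when the agent follows strategy pol. *)
Fixpoint traj_lik (pol : strategy) (th : Theta) (mu : belief) (e : seq step) : R :=
  match e with
  | [::] => 0  (* an episode always stops with a decision or a deadline *)
  | (a, o) :: e' =>
      pol mu true a *
      match a, o with
      | inl l, None => p th l * (if nilp e' then 1 else 0)          (* deadline *)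
      | inl l, Some w => (1 - p th l) * q th l w * traj_lik pol th (Mupd l mu w) e'
      | inr _, None => if nilp e' then 1 else 0
      | inr _, Some _ => 0
      end
  end.

Definition episode_lik (pol : strategy) (mu0 : belief) (e : seq step) : R :=
  \sum_(th : Theta) mu0 th * traj_lik pol th mu0 e.

Definition data_lik (N : nat) (pol : strategy) (mu0 : 'I_N -> belief)
    (D : 'I_N -> seq step) : R :=
  \prod_(n < N) episode_lik pol (mu0 n) (D n).

Fixpoint policy_prod (pol : strategy) (mu : belief) (e : seq step) : R :=
  match e with
  | [::] => 1
  | s :: e' => pol mu true s.1 * policy_prod pol (next_belief mu s) e'
  end.

End Model.

Definition boltzmann (R : realType) (Theta Lambda : finType) (K : Type) (d : nat)
    (Q : K -> act Theta Lambda -> belief R Theta -> bool -> 'rV[R]_d -> R)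
    (kappa : K) (eta : 'rV[R]_d) (rho : R) : strategy R Theta Lambda :=
  fun mu nu a =>
    expR (- (rho * Q kappa a mu nu eta)) /
    \sum_(a' : act Theta Lambda) expR (- (rho * Q kappa a' mu nu eta)).

(* Main.v *)
Require Import Defs.
From mathcomp Require Import all_boot all_order all_algebra.
From mathcomp Require Import reals sequences exp.
Import Order.TTheory GRing.Theory Num.Theory.
Local Open Scope ring_scope.

Fixpoint dyn (R : realType) (Theta Lambda Omega : finType)
  (p : Theta -> Lambda -> R) (q : Theta -> Lambda -> Omega -> R)
  (th : Theta) (e : seq (step Theta Lambda Omega)) : R :=
  match e with
  | [::] => 0
  | (a, o) :: e' =>
      match a, o with
      | inl l, None => p th l * (if nilp e' then 1 else 0)
      | inl l, Some w => (1 - p th l) * q th l w * @dyn R Theta Lambda Omega p q th e'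
      | inr _, None => if nilp e' then 1 else 0
      | inr _, Some _ => 0
      end
  end.
Arguments dyn {R Theta Lambda Omega}.

Lemma traj_dyn (R : realType) (Theta Lambda Omega : finType)
  (p : Theta -> Lambda -> R) (q : Theta -> Lambda -> Omega -> R)
  pol th e : forall mu,
  traj_lik p q pol th mu e = policy_prod p q pol mu e * dyn p q th e.
Proof.
elim: e => [|[a o] e IH] mu /=; first by rewrite mulr0.
case: a => [l|t]; case: o => [w|] /=.
- rewrite IH -!mulrA; congr (_ * _); rewrite [RHS]mulrCA; congr (_ * _); by rewrite mulrCA.
- by case: e {IH} => [|s e] /=; rewrite ?mulr1 ?mulr0.
- by rewrite !mulr0.
- by case: e {IH} => [|s e] /=; rewrite ?mulr1 ?mulr0.
Qed.

Lemma dyn_ge0 (R : realType) (Theta Lambda Omega : finType)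
  (p : Theta -> Lambda -> R) (q : Theta -> Lambda -> Omega -> R)
  (hp : forall th l, 0 < p th l < 1)
  (hq : forall th l, is_dist (q th l)) th e : 0 <= dyn p q th e.
Proof.
elim: e => [|[a o] e IH] //=.
case: a => [l|t]; case: o => [w|] //=.
- have /andP[h1 h2] := hp th l. have [hq1 _] := hq th l.
  apply: mulr_ge0 => //; apply: mulr_ge0 => //; rewrite subr_ge0; exact: ltW.
- have /andP[h1 h2] := hp th l.
  by apply: mulr_ge0; [exact: ltW| case: ifP].
- by case: ifP.
Qed.

Theorem proposition6 (R : realType) (Theta Lambda Omega : finType)
  (p : Theta -> Lambda -> R) (q : Theta -> Lambda -> Omega -> R)
  (hp : forall th l, 0 < p th l < 1)
  (hq : forall th l, is_dist (q th l))
  (K : Type) (d : nat)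
  (Q : K -> act Theta Lambda -> belief R Theta -> bool -> 'rV[R]_d -> R)
  (hQ : forall kappa a mu nu eta, 0 <= Q kappa a mu nu eta)
  (Pkappa : K -> R) (Peta : K -> 'rV[R]_d -> R) (Prho : R -> R)
  (hPk : forall kappa, 0 <= Pkappa kappa)
  (hPe : forall kappa eta, 0 <= Peta kappa eta)
  (hPr : forall rho, 0 <= Prho rho)
  (N : nat) (mu0 : 'I_N -> belief R Theta) (hmu0 : forall n, is_dist (mu0 n))
  (D : 'I_N -> seq (step Theta Lambda Omega)) :
  exists c : R, 0 <= c /\
    forall (kappa : K) (eta : 'rV[R]_d) (rho : R),
      Pkappa kappa * Peta kappa eta * Prho rho *
        data_lik p q (boltzmann Q kappa eta rho) mu0 D
      = c * (Pkappa kappa * Peta kappa eta * Prho rho *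
             \prod_(n < N) policy_prod p q (boltzmann Q kappa eta rho) (mu0 n) (D n)).
Proof.
exists (\prod_(n < N) \sum_th mu0 n th * dyn p q th (D n)); split.
  apply: prodr_ge0 => n _; apply: sumr_ge0 => th _; apply: mulr_ge0.
    by have [h _] := hmu0 n.
  exact: dyn_ge0.
move=> kappa eta rho.
rewrite /data_lik mulrCA; congr (_ * _).
rewrite -big_split /=; apply: eq_bigr => n _.
rewrite /episode_lik mulr_suml; apply: eq_bigr => th _.
by rewrite traj_dyn [_ * dyn _ _ _ _]mulrC mulrA.
Qed.
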